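(* Let $A$ be a general metric space. (a) If $\mathcal F$ is a weakly flat filter on $A$ then $M^-(\mathcal F)$ is a $\mathcal P_1$-flat left module; if $\mathcal F$ is flat then $M^-(\mathcal F)$ is $\mathcal P_2$-flat. (b) If $M$ is a $\mathcal P_1$-flat left module then $\mathcal F(M)$ is a weakly flat filter on $A$ (with filter basis $\{\Gamma(M)(\epsilon):\epsilon>0\}$); if $M$ is $\mathcal P_2$-flat then $\mathcal F(M)$ is flat. (c) Both assignments are monotone: $\mathcal F_1\supseteq\mathcal F_2$ implies $M^-(\mathcal F_1)\Rightarrow M^-(\mathcal F_2)$, and $M_1\Rightarrow M_2$ implies $\mathcal F(M_1)\supseteq\mathcal F(M_2)$. (d) For every weakly flat filter $\mathcal F$ and every left module $M$: $\mathcal F\supseteq\mathcal F(M)$ iff $M^-(\mathcal F)\Rightarrow M$. (e) For every $\mathcal P_1$-flat left module $M$, $M^-(\mathcal F(M))=M$. Consequently, with $\mathrm{WFil}(A)$ (resp. $\mathrm{FFil}(A)$) the preorder of weakly flat (resp. flat) filters ordered by reverse inclusion, $\mathcal F\mapsto M^-(\mathcal F)$ is a reflector $\mathrm{WFil}(A)\to\mathrm{Flat}_{\mathcal P_1}(A)_0$ (resp. $\mathrm{FFil}(A)\to\mathrm{Flat}_{\mathcal P_2}(A)_0$) whose right adjoint $M\mapsto\mathcal F(M)$ is full (and injective).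
   Context: $\bar{\mathbb R}_+=[0,\infty]$ is the symmetric monoidal closed category with an arrow $x\to y$ iff $x\ge y$, tensor $+$ ($x+\infty=\infty$), unit $0$, internal hom $[x,y]=\max(y-x,0)$ for finite $x,y$, $[x,\infty]=\infty$ for $x<\infty$, $[\infty,y]=0$; $\inf\emptyset=\infty$, $\sup\emptyset=0$. A general metric space $A$ is a set with $A(-,-):A\times A\to[0,\infty]$ such that $A(x,x)=0$ and $A(x,z)\le A(x,y)+A(y,z)$ (no symmetry or separation assumed). A left module on $A$ is a map $M:A\to[0,\infty]$ with $M(x)\le M(y)+A(x,y)$ for all $x,y$; a right module is $N:A\to[0,\infty]$ with $N(y)\le A(x,y)+N(x)$. For left modules, $M\Rightarrow M'$ means $M(x)\ge M'(x)$ for all $x$. A left module $M$ is $\mathcal P_1$-flat iff (F1) $\inf_x M(x)=0$ and (F3) for every $v\in[0,\infty]$ and every right module $N$, $\inf_x(M(x)+[v,N(x)])=[v,\inf_x(M(x)+N(x))]$; $M$ is $\mathcal P_2$-flat iff (F3) holds and (F2) for every finite (possibly empty) family $(N_i)_{i\in I}$ of right modules, $\inf_x(M(x)+\max_i N_i(x))=\max_i\inf_x(M(x)+N_i(x))$ (max of the empty family is $0$). (These are the specialisations of enriched $\mathcal P_1$-/$\mathcal P_2$-flatness, $\mathcal P_1$ = weights on the empty or unit category, $\mathcal P_2$ = weights on categories with finitely many objects.) $\mathrm{Flat}_{\mathcal P_k}(A)_0$ is the preorder of $\mathcal P_k$-flat left modules under $\Rightarrow$. A filter on $A$ is a nonempty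 set of nonempty subsets closed under finite intersections and supersets. For $t:A\to[0,\infty]$, $\lim^+_{\mathcal F}t=\inf_{f\in\mathcal F}\sup_{x\in f}t(x)$ and $\lim^-_{\mathcal F}t=\sup_{f\in\mathcal F}\inf_{x\in f}t(x)$. $M^-(\mathcal F)$ is the left module $x\mapsto\lim^-_{y\in\mathcal F}A(x,y)$. $\mathcal F$ is weakly flat iff $\lim^+_{\mathcal F}M^-(\mathcal F)=0$, equivalently: for every $\epsilon>0$ there is $f\in\mathcal F$ such that for all $x\in f$ and all $g\in\mathcal F$ there is $y\in g$ with $A(x,y)\le\epsilon$. $\mathcal F$ is flat iff for every $\epsilon>0$ there is $f\in\mathcal F$ such that for every finite family $x_1,\dots,x_n\in f$ and every $g\in\mathcal F$ there is $y\in g$ with $A(x_i,y)\le\epsilon$ for all $i$. For a left module $M$, $\Gamma(M)(\epsilon)=\{x\in A: M(x)\le\epsilon\}$ and $\mathcal F(M)$ is the set of subsets of $A$ containing some $\Gamma(M)(\epsilon)$ with $\epsilon>0$. *)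

(* Defs.v *)
(* [0,oo] is modelled inside \bar R (R : realType),
   all relevant functions are required to be nonnegative. *)
From HB Require Import structures.
From mathcomp Require Import all_boot all_order all_algebra.
From mathcomp Require Import all_classical all_reals ereal.
Set Implicit Arguments. Unset Strict Implicit. Unset Printing Implicit Defensive.
Import Order.TTheory GRing.Theory Num.Theory.
Local Open Scope classical_set_scope.
Local Open Scope ereal_scope.

Section Defs.
Context {R : realType} {A : Type}.

Definition ehom (x y : \bar R) : \bar R :=
  if x == +oo then 0 else if y == +oo then +oo else maxe (y - x) 0.

Definition gmetric (d : A -> A -> \bar R) : Prop :=
  [/\ forall x y, 0 <= d x y, forall x, d x x = 0
    & forall x y z, d x z <= d x y + d y z].

Definition leftmod (d : A -> A -> \bar R) (M : A -> \bar R) : Prop :=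
  (forall x, 0 <= M x) /\ (forall x y, M x <= M y + d x y).

Definition rightmod (d : A -> A -> \bar R) (N : A -> \bar R) : Prop :=
  (forall x, 0 <= N x) /\ (forall x y, N y <= d x y + N x).

Definition mimpl (M M' : A -> \bar R) : Prop := forall x, M' x <= M x.

Definition einf (f : A -> \bar R) : \bar R := ereal_inf (range f).

Definition fmax (n : nat) (e : 'I_n -> \bar R) : \bar R := \big[maxe/0]_(i < n) e i.

Definition F1 (M : A -> \bar R) : Prop := einf M = 0.

Definition F2 (d : A -> A -> \bar R) (M : A -> \bar R) : Prop :=
  forall (n : nat) (N : 'I_n -> A -> \bar R), (forall i, rightmod d (N i)) ->
    einf (fun x => M x + fmax (fun i => N i x)) = fmax (fun i => einf (fun x => M x + N i x)).

Definition F3 (d : A -> A -> \bar R) (M : A -> \bar R) : Prop :=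
  forall (v : \bar R) (N : A -> \bar R), 0 <= v -> rightmod d N ->
    einf (fun x => M x + ehom v (N x)) = ehom v (einf (fun x => M x + N x)).

Definition P1flat d M : Prop := [/\ leftmod d M, F1 M & F3 d M].
Definition P2flat d M : Prop := [/\ leftmod d M, F2 d M & F3 d M].

Definition is_filter (F : set (set A)) : Prop :=
  [/\ F !=set0, (forall f, F f -> f !=set0),
      (forall f g, F f -> F g -> F (f `&` g))
    & (forall f g, F f -> f `<=` g -> F g)].

Definition limplus (F : set (set A)) (t : A -> \bar R) : \bar R :=
  ereal_inf [set ereal_sup (t @` f) | f in F].
Definition limminus (F : set (set A)) (t : A -> \bar R) : \bar R :=
  ereal_sup [set ereal_inf (t @` f) | f in F].

Definition Mminus (d : A -> A -> \bar R) (F : set (set A)) : A -> \bar R :=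
  fun x => limminus F (fun y => d x y).

Definition weakly_flat d (F : set (set A)) : Prop :=
  is_filter F /\ limplus F (Mminus d F) = 0.

Definition flat d (F : set (set A)) : Prop :=
  is_filter F /\
  forall eps : R, (0 < eps)%R -> exists f, F f /\
    forall (n : nat) (xs : 'I_n -> A), (forall i, f (xs i)) ->
      forall g, F g -> exists y, g y /\ forall i, d (xs i) y <= eps%:E.

Definition Gamma (M : A -> \bar R) (eps : R) : set A := [set x | M x <= eps%:E].

Definition FM (M : A -> \bar R) : set (set A) :=
  [set g | exists eps : R, (0 < eps)%R /\ Gamma M eps `<=` g].

End Defs.

(* Main.v *)
Require Import Defs.
From HB Require Import structures.
From mathcomp Require Import all_boot all_order all_algebra.
From mathcomp Require Import all_classical all_reals ereal.
From mathcomp Require Import lra.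
Import Order.TTheory GRing.Theory Num.Theory.
Set Implicit Arguments. Unset Strict Implicit. Unset Printing Implicit Defensive.
Local Open Scope classical_set_scope.
Local Open Scope ereal_scope.

Section Aux.
Context {R : realType}.

Lemma le_epsn (x y : \bar R) (k : nat) :
  (forall e : R, (0 < e)%R -> x <= y + (e *+ k.+1)%:E) -> x <= y.
Proof.
move=> H; apply/lee_addgt0Pr => e e0.
have k0 : (0 < k.+1%:R :> R)%R by rewrite ltr0n.
have := H (e / k.+1%:R)%R (divr_gt0 e0 k0).
suff -> : ((e / k.+1%:R) *+ k.+1 = e)%R by [].
by rewrite -mulr_natr divfK // gt_eqF.
Qed.

Lemma ehom_oo (y : \bar R) : ehom +oo y = 0.
Proof. by rewrite /ehom eqxx. Qed.

Lemma ehom_ge0 (v y : \bar R) : 0 <= ehom v y.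
Proof.
rewrite /ehom; case: ifP => // _; case: ifP => // _; by rewrite le_max lexx orbT.
Qed.

Lemma ehomG (r : R) (y z : \bar R) : 0 <= z ->
  (ehom r%:E y <= z) <-> (y <= r%:E + z).
Proof.
move=> z0; rewrite /ehom /=.
case: y => [s| |] /=; case: z z0 => [t| |] //= z0.
- rewrite -EFinB -EFin_max -EFinD !lee_fin ge_max; rewrite lee_fin in z0.
  split; [case/andP => h _; lra | move=> h; apply/andP; split; lra].
- by split => _; rewrite ?leey.
- by split => _; [rewrite leNye | rewrite /= ge_max leNye z0].
- by split => _; rewrite ?leNye ?leey.
Qed.

Lemma ehom_mono (v y y' : \bar R) : 0 <= v -> y <= y' -> ehom v y <= ehom v y'.
Proof.
case: v => [r| |] v0 yy'; [|by rewrite !ehom_oo|by []].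
apply/ehomG; first exact: ehom_ge0.
apply: (le_trans yy'); apply/ehomG => //; exact: ehom_ge0.
Qed.

Lemma ehom_addl (v a b : \bar R) : 0 <= v -> 0 <= a ->
  ehom v (a + b) <= a + ehom v b.
Proof.
case: v => [r| |] v0 a0; [|by rewrite !ehom_oo adde_ge0 // ehom_ge0|by []].
apply/ehomG; first by rewrite adde_ge0 // ehom_ge0.
rewrite addeCA; apply: leeD2l; apply/ehomG => //; exact: ehom_ge0.
Qed.

Lemma ehom_self (r : R) : ehom r%:E r%:E = 0.
Proof. by rewrite /ehom /= -EFinB subrr -EFin_max maxxx. Qed.

Lemma fin_of_bounds (x : \bar R) (r : R) : 0 <= x -> x <= r%:E -> exists s, x = s%:E.
Proof. by case: x => [s| |] //; exists s. Qed.

Lemma min_pos (e1 e2 : R) : (0 < e1)%R -> (0 < e2)%R ->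
  exists eta : R, [/\ (0 < eta)%R, (eta <= e1)%R & (eta <= e2)%R].
Proof.
move=> h1 h2; case: (leP e1 e2) => h.
- by exists e1; split.
- by exists e2; split => //; apply: ltW.
Qed.

Lemma fmax_ge n (e : 'I_n -> \bar R) i : e i <= fmax e.
Proof. exact: le_bigmax. Qed.

Lemma fmax_le n (e : 'I_n -> \bar R) z : 0 <= z -> (forall i, e i <= z) -> fmax e <= z.
Proof. by move=> z0 h; apply: bigmax_le. Qed.

Lemma fmax_ge0 n (e : 'I_n -> \bar R) : 0 <= fmax e.
Proof.
rewrite /fmax; elim/big_rec: _ => // i x _ x0; by rewrite le_max x0 orbT.
Qed.

End Aux.

Section Aux2.
Context {R : realType}.

Lemma ge0_cases (x : \bar R) : 0 <= x -> x \is a fin_num \/ x = +oo.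
Proof. by case: x => [s| |] //; [left | right]. Qed.

Lemma ge0_neqNy (x : \bar R) : 0 <= x -> x != -oo.
Proof. by case: x. Qed.

Lemma fin_le (x y : \bar R) : 0 <= x -> x <= y -> y \is a fin_num -> x \is a fin_num.
Proof. by case: x => [s| |] //; case: y. Qed.

Lemma ehom_fin_oo (r : R) : ehom r%:E +oo = +oo.
Proof. by []. Qed.

Lemma arith3 (a : \bar R) (e : R) : 0 <= a ->
  e%:E + ((e + e)%:E + a) = a + (e *+ 3)%:E.
Proof.
case: a => [s| |] //= _; rewrite -!EFinD; congr EFin; lra.
Qed.

Lemma arith4 (a : \bar R) (e : R) : 0 <= a ->
  e%:E + (a + (e *+ 3)%:E) = a + (e *+ 4)%:E.
Proof.
case: a => [s| |] //= _; rewrite -!EFinD; congr EFin; lra.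
Qed.

End Aux2.

Section Main.
Context {R : realType} {A : Type} (d : A -> A -> \bar R) (hd : gmetric d).

Let d0 : forall x y, 0 <= d x y. Proof. by case: hd. Qed.
Let dxx : forall x, d x x = 0. Proof. by case: hd. Qed.
Let dtri : forall x y z, d x z <= d x y + d y z. Proof. by case: hd. Qed.

Lemma Mm_ge F f x : F f -> ereal_inf [set d x y | y in f] <= Mminus d F x.
Proof. by move=> Ff; apply: ereal_sup_ubound; exists f. Qed.

Lemma Mm_le F x z : (forall f, F f -> ereal_inf [set d x y | y in f] <= z) ->
  Mminus d F x <= z.
Proof. by move=> h; apply: ge_ereal_sup => _ [f Ff <-]; exact: h. Qed.

Lemma Mm_approx F f x (e : R) : F f -> Mminus d F x \is a fin_num -> (0 < e)%R ->
  exists z, f z /\ d x z <= Mminus d F x + e%:E.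
Proof.
move=> Ff fin e0.
have : ereal_inf [set d x y | y in f] < Mminus d F x + e%:E.
  by apply: (le_lt_trans (Mm_ge x Ff)); rewrite lteDl.
by case/ereal_inf_lt => _ [z fz <-] lt; exists z; split => //; exact: ltW.
Qed.

Lemma Mm_ge0 F : is_filter F -> forall x, 0 <= Mminus d F x.
Proof.
case=> [[f Ff] _ _ _] x; apply: le_trans (Mm_ge x Ff).
by apply: le_ereal_inf_tmp => _ [y _ <-]; exact: d0.
Qed.

Lemma Mm_leftmod F : is_filter F -> leftmod d (Mminus d F).
Proof.
move=> hF; split; first exact: Mm_ge0.
move=> x y; have My0 := Mm_ge0 hF y.
case: (ge0_cases (d0 x y)) => [dfin|->]; last by rewrite addey ?leey // ge0_neqNy.
case: (ge0_cases My0) => [Myfin|->]; last by rewrite addye ?leey // ge0_neqNy.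
apply/lee_addgt0Pr => e e0; apply: Mm_le => f Ff.
have [z [fz hz]] := Mm_approx Ff Myfin e0.
apply: ge_ereal_inf; exists (d x z); first by exists z.
apply: (le_trans (dtri x y z)); rewrite (addeC (Mminus d F y)) -addeA.
exact: leeD2l.
Qed.

Definition WF F := forall e : R, (0 < e)%R ->
  exists f0, F f0 /\ forall x, f0 x -> Mminus d F x <= e%:E.

Lemma wf_WF F : weakly_flat d F -> WF F.
Proof.
move=> [hF lim] e e0.
have : limplus F (Mminus d F) < e%:E by rewrite lim lte_fin.
case/ereal_inf_lt => _ [f Ff <-] lt; exists f; split => // x fx.
by apply: le_trans (ltW lt); apply: ereal_sup_ubound; exists x.
Qed.

Lemma small_of_flat F f (e : R) :
  (forall n (xs : 'I_n -> A), (forall i, f (xs i)) ->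
      forall g, F g -> exists y, g y /\ forall i, d (xs i) y <= e%:E) ->
  forall x, f x -> Mminus d F x <= e%:E.
Proof.
move=> H x fx; apply: Mm_le => g Fg.
have [y [gy hy]] := H 1%N (fun _ => x) (fun _ => fx) g Fg.
by apply: ge_ereal_inf; exists (d x y); [exists y | exact: hy ord0].
Qed.

Lemma flat_WF F : flat d F -> WF F.
Proof.
move=> [hF fl] e e0; have [f [Ff H]] := fl e e0.
by exists f; split => //; exact: small_of_flat.
Qed.

Lemma WF_F1 F : is_filter F -> WF F -> F1 (Mminus d F).
Proof.
move=> hF W; rewrite /F1 /einf; apply: le_anti; apply/andP; split.
- apply/lee_addgt0Pr => e e0; rewrite add0e.
  have [f0 [Ff0 H]] := W e e0.
  case: hF => _ hne _ _; have [z fz] := hne f0 Ff0.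
  by apply: ge_ereal_inf; exists (Mminus d F z); [exists z | exact: H].
- by apply: le_ereal_inf_tmp => _ [x _ <-]; exact: Mm_ge0.
Qed.

Lemma WF_F3 F : is_filter F -> WF F -> F3 d (Mminus d F).
Proof.
move=> hF W v N v0 hN.
case: v v0 => [r| |] v0 //; last first.
  have -> : (fun x => Mminus d F x + ehom +oo (N x)) = Mminus d F.
    by apply/funext => x; rewrite ehom_oo adde0.
  by rewrite ehom_oo; exact: WF_F1.
have M0 := Mm_ge0 hF.
have c0 : 0 <= einf (fun x => Mminus d F x + N x).
  by apply: le_ereal_inf_tmp => _ [x _ <-]; rewrite adde_ge0 // hN.1.
apply: le_anti; apply/andP; split.
- case: (ge0_cases c0) => [cfin|coo]; last by rewrite coo ehom_fin_oo leey.
  apply: (@le_epsn _ _ _ 2) => e e0.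
  have : einf (fun x => Mminus d F x + N x) < einf (fun x => Mminus d F x + N x) + e%:E.
    by rewrite lteDl.
  case/ereal_inf_lt => _ [x' _ <-] hx'.
  have Mfin : Mminus d F x' \is a fin_num.
    apply: (fin_le (M0 x') (y := einf (fun x => Mminus d F x + N x) + e%:E)).
      by apply: le_trans (ltW hx'); rewrite leeDl // hN.1.
    by rewrite fin_numD cfin.
  have [f0 [Ff0 H0]] := W e e0.
  have [z [fz hz]] := Mm_approx Ff0 Mfin e0.
  apply: ge_ereal_inf; exists (Mminus d F z + ehom r%:E (N z)); first by exists z.
  have hNz : N z <= (e + e)%:E + einf (fun x => Mminus d F x + N x).
    apply: (le_trans (hN.2 x' z)).
    apply: (@le_trans _ _ (Mminus d F x' + e%:E + N x')); first exact: leeD2r.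
    rewrite addeAC; apply: (le_trans (leeD2r _ (ltW hx'))).
    by rewrite -addeA addeC EFinD.
  have := leeD (H0 z fz) (le_trans (ehom_mono v0 hNz) (ehom_addl _ v0 _)).
  rewrite arith3 //; last exact: ehom_ge0.
  by apply; rewrite lee_fin ltW // addr_gt0.
- apply: le_ereal_inf_tmp => _ [x _ <-].
  apply/ehomG; first by rewrite adde_ge0 // ehom_ge0.
  apply: (@le_trans _ _ (Mminus d F x + N x)).
    by apply: ereal_inf_lbound; exists x.
  rewrite addeCA; apply: leeD2l; apply/ehomG; first exact: ehom_ge0.
  exact: lexx.
Qed.


Lemma flat_F2 F : flat d F -> F2 d (Mminus d F).
Proof.
move=> [hF fl] n N hN.
have M0 := Mm_ge0 hF.
have N0 : forall i x, 0 <= N i x by move=> i x; exact: (hN i).1.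
apply: le_anti; apply/andP; split; last first.
  apply: le_ereal_inf_tmp => _ [x _ <-].
  apply: fmax_le; first by rewrite adde_ge0 // fmax_ge0.
  move=> i; apply: (@le_trans _ _ (Mminus d F x + N i x)).
    by apply: ereal_inf_lbound; exists x.
  by apply: leeD2l; exact: (fmax_ge (fun i => N i x)).
have c0 : forall i, 0 <= einf (fun x => Mminus d F x + N i x).
  by move=> i; apply: le_ereal_inf_tmp => _ [x _ <-]; rewrite adde_ge0.
have m0 : 0 <= fmax (fun i => einf (fun x => Mminus d F x + N i x)) by exact: fmax_ge0.
case: (ge0_cases m0) => [mfin|moo]; last by rewrite moo leey.
have cfin : forall i, einf (fun x => Mminus d F x + N i x) \is a fin_num.
  by move=> i; exact: (fin_le (c0 i) (fmax_ge (fun i => einf (fun x => Mminus d F x + N i x)) i) mfin).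
apply: (@le_epsn _ _ _ 3) => e e0.
have [f [Ff Hf]] := fl e e0.
have Mf := small_of_flat Hf.
have hx' : forall i, exists x', Mminus d F x' + N i x' <=
    einf (fun x => Mminus d F x + N i x) + e%:E.
  move=> i.
  have : einf (fun x => Mminus d F x + N i x) < einf (fun x => Mminus d F x + N i x) + e%:E.
    by rewrite lteDl.
  by case/ereal_inf_lt => _ [x' _ <-] h; exists x'; exact: ltW.
have [x' Hx'] := choice hx'.
have hz : forall i, exists z, f z /\ d (x' i) z <= Mminus d F (x' i) + e%:E.
  move=> i.
  have fin : Mminus d F (x' i) \is a fin_num.
    apply: (fin_le (M0 (x' i)) (y := einf (fun x => Mminus d F x + N i x) + e%:E)).
      by apply: le_trans (Hx' i); rewrite leeDl.
    by rewrite fin_numD cfin.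
  exact: Mm_approx Ff fin e0.
have [z Hz] := choice hz.
have [y [fy hy]] := Hf n z (fun i => (Hz i).1) f Ff.
apply: ge_ereal_inf; exists (Mminus d F y + fmax (fun i => N i y)); first by exists y.
rewrite -arith4 //; apply: leeD; first exact: Mf.
apply: fmax_le; first by rewrite adde_ge0 // lee_fin mulrn_wge0 // ltW.
move=> i.
apply: (le_trans ((hN i).2 (z i) y)).
apply: (le_trans (leeD2r _ (hy i))).
set c := einf (fun x => Mminus d F x + N i x).
have hc : c <= fmax (fun i => einf (fun x => Mminus d F x + N i x)).
  exact: (fmax_ge (fun i => einf (fun x => Mminus d F x + N i x)) i).
have h1 : N i (z i) <= c + (e + e)%:E.
  apply: (le_trans ((hN i).2 (x' i) (z i))).
  apply: (le_trans (leeD2r _ (Hz i).2)).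
  rewrite addeAC EFinD addeA; apply: leeD2r; exact: Hx' i.
apply: (le_trans (leeD2l _ h1)).
rewrite addeCA; apply: (@leeD _ c _ _ _ hc); rewrite -EFinD lee_fin; lra.
Qed.

Lemma einf_Md M x : leftmod d M -> einf (fun y => M y + d x y) = M x.
Proof.
move=> hM; apply: le_anti; apply/andP; split.
  by apply: ge_ereal_inf; exists (M x + d x x); [exists x | rewrite dxx adde0].
by apply: le_ereal_inf_tmp => _ [y _ <-]; exact: hM.2.
Qed.

Lemma dright x : rightmod d (d x).
Proof. by split => // y z; rewrite addeC; exact: dtri. Qed.

Lemma M_le_inf_Gamma M x (e : R) : leftmod d M -> (0 < e)%R ->
  M x <= ereal_inf [set d x y | y in Gamma M e] + e%:E.
Proof.
move=> hM e0; rewrite -leeBlDr //; apply: le_ereal_inf_tmp => _ [y Gy <-].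
rewrite leeBlDr //; apply: le_trans (hM.2 x y) _.
by rewrite addeC; apply: leeD2l; exact: Gy.
Qed.

Lemma FM_filter M : leftmod d M -> F1 M -> is_filter (FM M).
Proof.
move=> hM hF1; split.
- by exists setT; exists 1%R; split.
- move=> g [e [e0 sub]].
  have : einf M < e%:E by rewrite hF1 lte_fin.
  by case/ereal_inf_lt => _ [x _ <-] lt; exists x; apply: sub; exact: ltW.
- move=> f g [e1 [e10 s1]] [e2 [e20 s2]].
  have [eta [eta0 h1 h2]] := min_pos e10 e20.
  exists eta; split => // x Gx; split; [apply: s1 | apply: s2];
    by rewrite /Gamma /=; apply: le_trans Gx _; rewrite lee_fin.
- by move=> f g [e [e0 s]] fg; exists e; split => //; exact: subset_trans s fg.
Qed.

Lemma FM_inv M : P1flat d M -> Mminus d (FM M) = M.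
Proof.
case=> hM hF1 hF3; apply/funext => x.
apply: le_anti; apply/andP; split; last first.
  apply/lee_addgt0Pr => e e0; apply: le_trans (M_le_inf_Gamma x hM e0) _.
  by apply: leeD2r; apply: Mm_ge; exists e; split.
have Mx0 := hM.1 x.
case: (ge0_cases Mx0) => [fin|oo]; last by rewrite oo leey.
have [m Em] : exists m, M x = m%:E by case: (M x) fin => [s| |] //; exists s.
apply/lee_addgt0Pr => e e0; apply: Mm_le => g [del [del0 sub]].
have [eta [eta0 h1 h2]] := min_pos del0 e0.
have key := hF3 (M x) (d x) Mx0 (dright x).
rewrite einf_Md // Em ehom_self in key.
have : einf (fun y => M y + ehom m%:E (d x y)) < eta%:E by rewrite key lte_fin.
case/ereal_inf_lt => _ [y _ <-] lt.
have hy1 : M y <= eta%:E by apply: le_trans (ltW lt); rewrite leeDl // ehom_ge0.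
have hy2 : ehom m%:E (d x y) <= eta%:E by apply: le_trans (ltW lt); rewrite leeDr // hM.1.
apply: ge_ereal_inf; exists (d x y).
  by exists y => //; apply: sub; rewrite /Gamma /=; apply: le_trans hy1 _; rewrite lee_fin.
rewrite Em; apply: (le_trans ((ehomG _ _ _).1 hy2)); first by rewrite lee_fin ltW.
by apply: leeD2l; rewrite lee_fin.
Qed.

Lemma FM_wflat M : P1flat d M -> weakly_flat d (FM M).
Proof.
move=> hP; have [hM hF1 hF3] := hP; have hF := FM_filter hM hF1.
split => //; rewrite FM_inv //; apply: le_anti; apply/andP; split.
- apply/lee_addgt0Pr => e e0; rewrite add0e; apply: ge_ereal_inf.
  exists (ereal_sup (M @` Gamma M e)); first by exists (Gamma M e) => //; exists e; split.
  by apply: ge_ereal_sup => _ [y Gy <-]; exact: Gy.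
- apply: le_ereal_inf_tmp => _ [g Fg <-].
  case: hF => _ hne _ _; have [y gy] := hne g Fg.
  by apply: le_trans (hM.1 y) _; apply: ereal_sup_ubound; exists y.
Qed.

Lemma F3_F1 M : leftmod d M -> F3 d M -> F1 M.
Proof.
move=> hM hF3.
have hN : rightmod d (fun _ : A => (0 : \bar R)).
  by split => // x y; rewrite adde0.
have := hF3 +oo (fun _ => 0) (leey _) hN.
rewrite ehom_oo.
have -> : (fun x => M x + ehom +oo ((fun _ : A => (0 : \bar R)) x)) = M.
  by apply/funext => x; rewrite ehom_oo adde0.
by [].
Qed.

Lemma FM_flat M : P2flat d M -> flat d (FM M).
Proof.
case=> hM hF2 hF3; have hF1 := F3_F1 hM hF3.
split; first exact: FM_filter.
move=> e e0; have e20 : (0 < e / 2)%R by rewrite divr_gt0.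
exists (Gamma M (e / 2)); split; first by exists (e / 2)%R; split.
move=> n xs hxs g [del [del0 sub]].
pose N := fun z => fmax (fun i => d (xs i) z).
have hN : rightmod d N.
  split; first by move=> z; exact: fmax_ge0.
  move=> w z; apply: fmax_le; first by rewrite adde_ge0 // fmax_ge0.
  move=> i; apply: le_trans (dtri (xs i) w z) _; rewrite addeC; apply: leeD2l.
  exact: (fmax_ge (fun i => d (xs i) w) i).
have key2 := hF2 n (fun i => d (xs i)) (fun i => dright (xs i)).
have E2 : fmax (fun i => einf (fun x => M x + d (xs i) x)) = fmax (fun i => M (xs i)).
  by congr fmax; apply/funext => i; exact: einf_Md.
have m0 : 0 <= fmax (fun i => M (xs i)) by exact: fmax_ge0.
have mle : fmax (fun i => M (xs i)) <= (e / 2)%:E.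
  by apply: fmax_le => //; rewrite lee_fin ltW.
have [r Er] := fin_of_bounds m0 mle.
have key3 := hF3 _ N m0 hN.
have E3 : einf (fun x => M x + N x) = r%:E by rewrite /N key2 E2 Er.
rewrite E3 Er ehom_self in key3.
have [eta [eta0 h1 h2]] := min_pos del0 e20.
have : einf (fun x => M x + ehom r%:E (N x)) < eta%:E by rewrite key3 lte_fin.
case/ereal_inf_lt => _ [y _ <-] lt.
have hy1 : M y <= eta%:E by apply: le_trans (ltW lt); rewrite leeDl // ehom_ge0.
have hy2 : ehom r%:E (N y) <= eta%:E by apply: le_trans (ltW lt); rewrite leeDr // hM.1.
have hy3 := (ehomG _ _ (z := eta%:E) _).1 hy2.
exists y; split.
  by apply: sub; rewrite /Gamma /=; apply: le_trans hy1 _; rewrite lee_fin.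
move=> i; apply: le_trans (fmax_ge (fun i => d (xs i) y) i) _.
apply: le_trans (hy3 _) _; first by rewrite lee_fin ltW.
rewrite -EFinD lee_fin; move: mle; rewrite Er lee_fin => mle; lra.
Qed.

Lemma part_d F M : weakly_flat d F -> leftmod d M ->
  (FM M `<=` F <-> mimpl (Mminus d F) M).
Proof.
move=> wF hM; have hF := wF.1; have W := wf_WF wF; split.
- move=> sub x; apply/lee_addgt0Pr => e e0.
  apply: le_trans (M_le_inf_Gamma x hM e0) _; apply: leeD2r.
  by apply: Mm_ge; apply: sub; exists e; split.
- move=> imp g [del [del0 s]]; have [f0 [Ff0 H]] := W del del0.
  case: hF => _ _ _ hsup; apply: (hsup f0) => // x fx; apply: s.
  by rewrite /Gamma /=; apply: le_trans (imp x) (H x fx).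
Qed.

End Main.

Theorem mainTheorem8 (R : realType) (A : Type) (d : A -> A -> \bar R)
  (hd : gmetric d) :
  (* (a) *)
  ((forall F, weakly_flat d F -> P1flat d (Mminus d F)) /\
   (forall F, flat d F -> P2flat d (Mminus d F))) /\
  (* (b) *)
  ((forall M, P1flat d M -> weakly_flat d (FM M)) /\
   (forall M, P2flat d M -> flat d (FM M))) /\
  (* (c) *)
  ((forall F1 F2, is_filter F1 -> is_filter F2 -> F2 `<=` F1 ->
      mimpl (Mminus d F1) (Mminus d F2)) /\
   (forall M1 M2, leftmod d M1 -> leftmod d M2 -> mimpl M1 M2 ->
      FM M2 `<=` FM M1)) /\
  (* (d) *)
  (forall F M, weakly_flat d F -> leftmod d M ->
     (FM M `<=` F <-> mimpl (Mminus d F) M)) /\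
  (* (e) *)
  (forall M, P1flat d M -> Mminus d (FM M) = M) /\
  (* consequence: the right adjoint M |-> F(M) is full and injective *)
  (forall M1 M2, P1flat d M1 -> P1flat d M2 ->
     (FM M2 `<=` FM M1 -> mimpl M1 M2) /\ (FM M1 = FM M2 -> M1 = M2)).
Proof.
have monoF : forall F1 F2 : set (set A), F2 `<=` F1 -> mimpl (Mminus d F1) (Mminus d F2).
  move=> F1 F2 s x; apply: le_ereal_sup => _ [f Ff <-]; exists f => //; exact: s.
split; [split|split; [split|split; [split|split; [|split]]]].
- move=> F wF; have W := wf_WF wF; split.
  + exact: Mm_leftmod wF.1.
  + exact: WF_F1 wF.1 W.
  + exact: WF_F3 wF.1 W.
- move=> F fF; have W := flat_WF fF; split.
  + exact: Mm_leftmod fF.1.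
  + exact: flat_F2.
  + exact: WF_F3 fF.1 W.
- exact: FM_wflat.
- exact: FM_flat.
- by move=> F1 F2 _ _; exact: monoF.
- move=> M1 M2 _ _ imp g [e [e0 s]]; exists e; split => // x Gx; apply: s.
  by rewrite /Gamma /=; apply: le_trans (imp x) Gx.
- exact: part_d.
- exact: FM_inv.
- move=> M1 M2 h1 h2.
  have full : forall M1 M2, P1flat d M1 -> P1flat d M2 -> FM M2 `<=` FM M1 -> mimpl M1 M2.
    move=> N1 N2 g1 g2 s; rewrite -(FM_inv hd g1) -(FM_inv hd g2); exact: monoF.
  split; first exact: full.
  move=> E; apply/funext => x; apply: le_anti.
  have s1 : FM M2 `<=` FM M1 by rewrite E.
  have s2 : FM M1 `<=` FM M2 by rewrite E.
  by rewrite (full _ _ h1 h2 s1) (full _ _ h2 h1 s2).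
Qed.
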